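(* Let $\mathcal{B}=(v_1,\dots,v_N)$ with $v_1,\dots,v_N$ independent and uniform in $\mathbb{F}_2^n$, let $C^k\in\mathbb{F}_2^N$ be the $k$-th column ($C^k_j=(v_j)_k$), define $k\sim_{\mathcal B}j$ iff $C^k=C^j$ or $C^k=1-C^j$, and let $|I|$ be the number of equivalence classes of $\sim_{\mathcal B}$ on $\{1,\dots,n\}$. Then for $i=1,\dots,n$, $${n\brace i}\frac{1}{2^{(N-1)(n-i)}}\prod_{j=1}^i\left(1-\frac{j-1}{2^{N-1}}\right)\le\mathbb{P}(|I|=i)\le{n\brace i}\frac{i^{n-i}}{2^{(N-1)(n-i)}}\prod_{j=1}^i\left(1-\frac{j-1}{2^{N-1}}\right),$$ where ${n\brace i}$ is the Stirling number of the second kind. *)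

(* Defs.v *)
From mathcomp Require Import all_boot all_order all_algebra.
Set Implicit Arguments. Unset Strict Implicit. Unset Printing Implicit Defensive.
Import Order.TTheory GRing.Theory Num.Theory.

Fixpoint stirling2 (n k : nat) : nat :=
  match n, k with
  | 0, 0 => 1
  | 0, _.+1 => 0
  | _.+1, 0 => 0
  | n'.+1, k'.+1 => k'.+1 * stirling2 n' k'.+1 + stirling2 n' k'
  end.

Definition family (N n : nat) := {ffun 'I_N -> 'rV['F_2]_n}.

Definition column N n (B : family N n) (k : 'I_n) : 'I_N -> 'F_2 :=
  fun j => B j ord0 k.

Definition simB N n (B : family N n) : rel 'I_n :=
  fun k j => [forall r, column B k r == column B j r]
          || [forall r, column B k r == (1 - column B j r)%R].

Definition nclasses N n (B : family N n) : nat :=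
  #|equivalence_partition (simB B) [set: 'I_n]|.

Definition prob_nclasses (R : numFieldType) N n (i : nat) : R :=
  (#|[set B : family N n | nclasses B == i]|%:R / #|{: family N n}|%:R)%R.

(* Main.v *)
Require Import Defs.
From mathcomp Require Import all_boot all_order all_algebra.
From mathcomp Require Import zify ring lra.
Import Order.TTheory GRing.Theory Num.Theory.
Set Implicit Arguments. Unset Strict Implicit. Unset Printing Implicit Defensive.

Section Count.
Variables (T A : finType) (e : T -> A) (c : nat).
Hypothesis he : forall X : {set A}, #|[set t | e t \in X]| = c * #|X|.

Local Notation FT n := {ffun 'I_n -> T}.
Definition Sg n (f : {ffun 'I_n -> T}) : {set A} := [set e (f k) | k : 'I_n].

Definition hcons n (p : T * {ffun 'I_n -> T}) : {ffun 'I_n.+1 -> T} :=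
  [ffun k => if unlift ord0 k is Some j then p.2 j else p.1].
Definition hdec n (f : {ffun 'I_n.+1 -> T}) : T * {ffun 'I_n -> T} :=
  (f ord0, [ffun j => f (lift ord0 j)]).

Lemma hconsK n : cancel (@hcons n) (@hdec n).
Proof.
case=> t g; rewrite /hdec /hcons /= ffunE unlift_none; congr pair.
by apply/ffunP => j; rewrite !ffunE liftK.
Qed.

Lemma hdecK n : cancel (@hdec n) (@hcons n).
Proof.
move=> f; apply/ffunP => k; rewrite /hcons /hdec ffunE.
by case: unliftP => [j ->|->] //=; rewrite ffunE.
Qed.

Lemma Sg_cons n t g : Sg (@hcons n (t, g)) = e t |: Sg g.
Proof.
apply/setP => a; rewrite in_setU1; apply/imsetP/idP.
  case=> k _ ->; rewrite /hcons ffunE; case: unliftP => [j _|_] /=.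
    by apply/orP; right; apply/imsetP; exists j.
  by rewrite eqxx.
case/orP => [/eqP ->|/imsetP [j _ ->]].
  by exists ord0 => //; rewrite /hcons ffunE unlift_none.
by exists (lift ord0 j) => //; rewrite /hcons ffunE liftK.
Qed.

Lemma sum_in (X : {set A}) : \sum_(t : T) (e t \in X) = c * #|X|.
Proof.
rewrite -he -sum1_card [RHS]big_mkcond /=; apply: eq_bigr => t _.
by rewrite inE; case: (e t \in X).
Qed.

Lemma cardT : #|T| = c * #|A|.
Proof. have := he setT; rewrite cardsT => <-; by apply: eq_card => t; rewrite !inE. Qed.

Lemma sum_notin (X : {set A}) : \sum_(t : T) (e t \notin X) = c * #|A| - c * #|X|.
Proof.
rewrite -sum_in -cardT -sum1_card.
have H : \sum_(t : T) 1 = \sum_t (e t \in X) + \sum_t (e t \notin X).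
  by rewrite -big_split /=; apply: eq_bigr => t _; case: (e t \in X).
by rewrite H addKn.
Qed.

Lemma cnt n i : \sum_(f : FT n) (#|Sg f| == i) = stirling2 n i * #|A| ^_ i * c ^ n.
Proof.
elim: n i => [|n IH] i.
  have H0 : forall f : FT 0, Sg f = set0.
    by move=> f; apply/setP => a; rewrite inE; apply/imsetP => -[[]].
  under eq_bigr do rewrite H0 cards0.
  rewrite sum_nat_const card_ffun card_ord expn0.
  by case: i.
rewrite (reindex (@hcons n)); last first.
  by exists (@hdec n) => f _; [apply: hconsK | apply: hdecK].
rewrite -(pair_big xpredT xpredT (fun t g => (#|Sg (hcons (t, g))| == i) : nat)) /=.
rewrite exchange_big /=.
have step : forall g : FT n,
   \sum_(t : T) (#|Sg (hcons (t, g))| == i : nat) =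
   (#|Sg g| == i) * (c * i) + (#|Sg g|.+1 == i) * (c * #|A| - c * #|Sg g|).
  move=> g; rewrite -sum_notin.
  have -> : (#|Sg g| == i) * (c * i) = (#|Sg g| == i) * \sum_(t : T) (e t \in Sg g).
    by rewrite sum_in; case: eqP => // ->.
  rewrite !big_distrr -big_split /=; apply: eq_bigr => t _.
  rewrite Sg_cons cardsU1; case: (e t \in Sg g) => /=; rewrite ?add0n ?add1n ?muln0 ?muln1 ?addn0 //.
under eq_bigr do rewrite step.
rewrite big_split /= -!big_distrl /=.
clear step; case: i IH => [|i] IH.
  by rewrite [X in _ + X]big1 // muln0 addn0 muln0.
have -> : \sum_(g : FT n) (#|Sg g|.+1 == i.+1) * (c * #|A| - c * #|Sg g|)
   = \sum_(g : FT n) (#|Sg g| == i) * (c * #|A| - c * i).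
  by apply: eq_bigr => g _; rewrite eqSS; case: eqP => // ->.
rewrite -big_distrl /= !IH ffactnSr -mulnBr expnS.
set s1 := stirling2 n i.+1; set s2 := stirling2 n i; set f := #|A| ^_ i.
set d := #|A| - i; set q := c ^ n.
set j := i.+1; ring.
Qed.
End Count.

Section Concrete.
Local Open Scope ring_scope.
Lemma F2_cases (x : 'F_2) : x = 0 \/ x = 1.
Proof. case: x => [[|[|m]]] // H; [left|right]; exact: val_inj. Qed.
Lemma t1 (x y : 'F_2) : (1 - x) + (1 - y) = x + y.
Proof. by apply/eqP; case: (F2_cases x) => ->; case: (F2_cases y) => ->. Qed.
Lemma t2 (a b x y : 'F_2) : a + x == b + y -> x != y -> a == 1 - b.
Proof. by case: (F2_cases x) => ->; case: (F2_cases y) => ->; case: (F2_cases a) => ->; case: (F2_cases b) => ->. Qed.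
Lemma t3 (b : 'F_2) : b + b = 0.
Proof. by apply/eqP; case: (F2_cases b) => ->. Qed.

Lemma t4 (x y : 'F_2) : x != y -> x == 1 - y.
Proof. by case: (F2_cases x) => ->; case: (F2_cases y) => ->. Qed.

Variables (M n : nat).
Local Notation T := {ffun 'I_M.+1 -> 'F_2}.
Local Notation A := {ffun 'I_M -> 'F_2}.
Definition col (B : Defs.family M.+1 n) (k : 'I_n) : T := [ffun r => B r ord0 k].
Definition eF (x : T) : A := [ffun r => x (lift ord0 r) + x ord0].

Lemma simB_e B k j : simB B k j = (eF (col B k) == eF (col B j)).
Proof.
apply/idP/eqP.
  case/orP => /forallP H; apply/ffunP => r; rewrite !ffunE.
    by rewrite /column in H; rewrite !(eqP (H _)).
  by rewrite /column in H; rewrite !(eqP (H _)) t1.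
move=> /ffunP H.
have H' : forall r, B (lift ord0 r) ord0 k + B ord0 ord0 k = B (lift ord0 r) ord0 j + B ord0 ord0 j.
  by move=> r; have := H r; rewrite !ffunE.
apply/orP; case: (eqVneq (B ord0 ord0 k) (B ord0 ord0 j)) => E.
  left; apply/forallP => r; rewrite /column; case: (unliftP ord0 r) => [r' ->|->]; last by rewrite E.
  by have := H' r'; rewrite E => /addIr ->.
right; apply/forallP => r; rewrite /column; case: (unliftP ord0 r) => [r' ->|->]; last exact: t4.
by apply: (t2 (x := B ord0 ord0 k) (y := B ord0 ord0 j)) => //; rewrite (H' r').
Qed.

Definition psi (p : A * 'F_2) : T := [ffun k => if unlift ord0 k is Some r then p.1 r + p.2 else p.2].
Definition phi (x : T) : A * 'F_2 := (eF x, x ord0).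

Lemma phiK : cancel phi psi.
Proof.
move=> x; apply/ffunP => k; rewrite /psi /phi ffunE /=.
case: (unliftP ord0 k) => [r ->|->] //; by rewrite ffunE -addrA t3 addr0.
Qed.
Lemma psiK : cancel psi phi.
Proof.
case=> a b; rewrite /psi /phi /eF /=; congr pair; last by rewrite ffunE unlift_none.
by apply/ffunP => r; rewrite !ffunE liftK unlift_none -addrA t3 addr0.
Qed.

Lemma heF (X : {set A}) : #|[set t | eF t \in X]| = 2 * #|X|.
Proof.
have -> : [set t | eF t \in X] = psi @: (setX X setT).
  rewrite (can2_imset_pre _ psiK phiK); apply/setP => t; by rewrite !inE andbT.
by rewrite (card_imset _ (can_inj psiK)) cardsX cardsT card_Fp // mulnC.
Qed.

Lemma ncl B : nclasses B = #|[set eF (col B k) | k : 'I_n]|.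
Proof.
rewrite /nclasses /equivalence_partition.
set g := fun k => eF (col B k).
pose h (a : A) := [set y | a == g y].
have -> : [set [set y in [set: 'I_n] | simB B x y] | x in [set: 'I_n]] = [set h (g x) | x in [set: 'I_n]].
  apply: eq_imset => x; apply/setP => y; by rewrite !inE simB_e.
rewrite (imset_comp h g) card_in_imset.
  by apply/eqP; rewrite eqn_leq; apply/andP; split; apply/subset_leq_card/subsetP => a /imsetP [x _ ->]; apply/imsetP; exists x.
move=> a b /imsetP [x _ ->] /imsetP [y _ ->] E.
have : x \in h (g x) by rewrite inE.
by rewrite E inE => /eqP.
Qed.

Definition colmap (B : Defs.family M.+1 n) : {ffun 'I_n -> T} := [ffun k => col B k].
Definition uncol (F : {ffun 'I_n -> T}) : Defs.family M.+1 n := [ffun r => \row_k F k r].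
Lemma colmapK : cancel colmap uncol.
Proof. move=> B; apply/ffunP => r; apply/rowP => k; by rewrite !ffunE mxE !ffunE. Qed.
Lemma uncolK : cancel uncol colmap.
Proof. move=> F; apply/ffunP => k; apply/ffunP => r; by rewrite !ffunE mxE. Qed.

Lemma count_fam i : #|[set B : Defs.family M.+1 n | nclasses B == i]| = (stirling2 n i * (2 ^ M) ^_ i * 2 ^ n)%N.
Proof.
have E : [set B : Defs.family M.+1 n | nclasses B == i] = uncol @: [set F | #|Sg eF F| == i].
  rewrite (can2_imset_pre _ uncolK colmapK); apply/setP => B; rewrite !inE ncl /Sg.
  have -> : [set eF (colmap B k) | k : 'I_n] = [set eF (col B k) | k : 'I_n] :> {set A}.
    by apply/setP => a; apply/imsetP/imsetP => -[x _ ->]; exists x; rewrite ?ffunE.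
  by [].
rewrite E (card_imset _ (can_inj uncolK)).
have -> : (2 ^ M)%N = #|A| by rewrite card_ffun card_Fp // card_ord.
rewrite -(cnt heF) -sum1_card [LHS]big_mkcond /=; apply: eq_bigr => F _.
by rewrite inE; case: (_ == _).
Qed.

Lemma card_fam : #|{: Defs.family M.+1 n}| = (2 ^ (M.+1 * n))%N.
Proof. by rewrite card_ffun card_mx card_Fp // card_ord mul1n -expnM mulnC. Qed.
End Concrete.

Section Final.
Local Open Scope ring_scope.

Lemma prod_ffact (R : realFieldType) (K i : nat) : (0 < K)%N ->
  \prod_(1 <= j < i.+1) (1 - (j.-1)%:R / (K%:R : R)) = (K ^_ i)%:R / (K%:R) ^+ i.
Proof.
move=> K0; have K0' : (K%:R : R) != 0 by rewrite pnatr_eq0 -lt0n K0.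
elim: i => [|i IH]; first by rewrite big_geq // ffactn0 expr0 divr1.
rewrite big_nat_recr //= IH ffactnSr.
case: (leqP i K) => H.
  rewrite natrM natrB // exprSr; field; by rewrite K0' expf_neq0.
by rewrite ffact_small // !mul0r.
Qed.

Theorem corollary8p6 (R : realFieldType) (N n i : nat)
  (hN : (1 <= N)%N) (hi1 : (1 <= i)%N) (hin : (i <= n)%N) :
  let P := \prod_(1 <= j < i.+1) (1 - (j.-1)%:R / (2%:R : R) ^+ N.-1) in
  (stirling2 n i)%:R / (2%:R : R) ^+ (N.-1 * (n - i)) * P
    <= prob_nclasses R N n i /\
  prob_nclasses R N n i
    <= (stirling2 n i)%:R * (i%:R : R) ^+ (n - i) / (2%:R : R) ^+ (N.-1 * (n - i)) * P.
Proof.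
case: N hN => [//|M] _ /=.
have K0 : (0 < 2 ^ M)%N by rewrite expn_gt0.
have Kr : (2%:R : R) ^+ M = (2 ^ M)%:R by rewrite natrX.
rewrite Kr prod_ffact // exprM Kr.
set X := _ * _.
have HX : prob_nclasses R M.+1 n i = X.
  rewrite /prob_nclasses count_fam card_fam /X.
  have Kr0 : ((2 ^ M)%:R : R) != 0 by rewrite pnatr_eq0 -lt0n K0.
  have -> : (2 ^ (M.+1 * n))%N = (2 ^ n * ((2 ^ M) ^ (n - i) * (2 ^ M) ^ i))%N.
    by rewrite -expnD subnK // -expnM -expnD mulSn.
  rewrite !natrM !natrX; field.
  by rewrite !expf_neq0 // pnatr_eq0.
rewrite HX; split => //.
have -> : (stirling2 n i)%:R * (i%:R : R) ^+ (n - i) / ((2 ^ M)%:R ^+ (n - i)) * (((2 ^ M) ^_ i)%:R / (2 ^ M)%:R ^+ i)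
   = X * (i%:R : R) ^+ (n - i) by rewrite /X; ring.
apply: ler_peMr; last by rewrite exprn_ege1 // ler1n.
by rewrite -HX /prob_nclasses divr_ge0 // ler0n.
Qed.
End Final.
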